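(* Let $D$ be a vertex-supported effective divisor on a metric graph $\Gamma$. Let $\mathcal{C}$ be the set of all cells of $|D|$ and $\mathcal{A}$ the set of all anchor cells of $|D|$. (1) There is a function $a:\mathcal{C}\to\mathcal{A}$ such that for each $C\in\mathcal{C}$ and a representative $L$ of $C$, the cell $a(C)$ is represented by an anchor divisor $N$ such that (i) $N(v)=L(v)$ for all vertices $v$ of $\Gamma$, and (ii) rational functions $f,g\in R(D)$ with $L=D+(f)$ and $N=D+(g)$ have the same outgoing slopes at the endpoints of every edge of $\Gamma$. (2) For this map $a$ and any anchor cell $A\in\mathcal{A}$, we have $|a^{-1}(A)|=2^{s(A)}$. Furthermore, for $0\le j\le s(A)$, there are exactly $\binom{s(A)}{j}$ cells of dimension $\dim A+j$ in $a^{-1}(A)$.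
   Context: A metric graph $\Gamma=(V,E)$ is a connected undirected graph whose edges have positive real lengths $M_e$. Divisors are finite formal $\mathbb{Z}$-combinations of points of $\Gamma$; effective means nonnegative coefficients; vertex-supported means support in $V$. A rational function is a continuous $f:\Gamma\to\mathbb{R}$, piecewise linear on each edge with finitely many pieces and integer slopes; $(f)=\sum_x\mathrm{ord}_x(f)x$ with $\mathrm{ord}_x(f)$ the sum of outgoing slopes of $f$ at $x$. $R(D)=\{f: D+(f)\text{ effective}\}$, $|D|=\{D+(f):f\in R(D)\}$. Cells of $|D|$: identify each open edge $e$ with $(0,M_e)$. A cell is given by data: nonnegative integers $d_v$ ($v\in V$); for some edges $e$ an ordered partition $d_e=\sum_{i=1}^{r_e}d_e^i$ into positive integers; integers $m_e$ ($e\in E$). $L\in|D|$ belongs to the cell iff $L(v)=d_v$ for all $v$; for edges with a partition $L|_{e^\circ}=\sum_{i}d_e^ix_i$ with $0<x_1<\dots<x_{r_e}<M_e$, and $L|_{e^\circ}=0$ for other edges; and every $f\in R(D)$ with $L=D+(f)$ has outgoing slope $m_e$ at $0\in e$ for all $e$. Elements of a cell are its representatives. For a representative $L$ of a cell $C$, with $I_L=\{x\in\Gamma\setminus V:L(x)>0\}$, $\dim C$ is one less than the number of connected components of $\Gamma\setminus I_L$. A divisor is an anchor divisor if each edge has at most one interior point where it is positive; a cell is an anchor cell if all its representatives are anchor divisors. For an anchor cell $A$: if $e_1,\dots,e_r$ are the edges on which the data of $A$ contain a (necessarily one-part) partition $c_i=c_i$, set $s(A)=\sum_{i=1}^r(c_i-1)$;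 if there are no such edges, $s(A)=0$. *)

(* Defs.v *)
From HB Require Import structures.
From mathcomp Require Import all_boot all_order all_algebra.
From mathcomp Require Import reals.
From Stdlib Require Import ClassicalEpsilon.

Set Implicit Arguments.
Unset Strict Implicit.
Unset Printing Implicit Defensive.

Import Order.TTheory GRing.Theory Num.Theory.
Local Open Scope ring_scope.

Section MetricGraph.

(* A metric graph: finite vertex set V, finite edge set E; every edge e has
   endpoints [src e], [tgt e] and a length [M e]; the open edge e is identified
   with the open interval (0, M e), 0 corresponding to [src e] and [M e] to
   [tgt e]. *)
Variables (R : realType) (V E : finType) (src tgt : E -> V) (M : E -> R).

Definition adj : rel V := fun u v =>
  [exists e : E, ((src e == u) && (tgt e == v)) || ((src e == v) && (tgt e == u))].

Definition connected_graph : Prop := forall u v : V, connect adj u v.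

(* Points of Gamma: vertices, and points [PE e t] with 0 < t < M e. *)
Inductive point := PV of V | PE of E & R.

Definition interior (e : E) (t : R) : bool := (0 < t) && (t < M e).

Definition is_divisor (D : point -> int) : Prop :=
  (forall e t, ~~ interior e t -> D (PE e t) = 0) /\
  exists s : seq (E * R), forall e t, D (PE e t) != 0 -> (e, t) \in s.

Definition effective (D : point -> int) : Prop := forall x, 0 <= D x.

Definition vertex_supported (D : point -> int) : Prop :=
  forall e t, D (PE e t) = 0.

(* restriction of a function on Gamma to the closed edge [0, M e] *)
Definition fe (f : point -> R) (e : E) (t : R) : R :=
  if t <= 0 then f (PV (src e))
  else if M e <= t then f (PV (tgt e)) else f (PE e t).

Definition ratfun (f : point -> R) : Prop :=
  forall e : E, exists (n : nat) (b : nat -> R) (s : nat -> int),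
    [/\ b 0%N = 0, b n = M e, (forall i, (i < n)%N -> b i < b i.+1) &
        forall i t, (i < n)%N -> b i <= t <= b i.+1 ->
          fe f e t = fe f e (b i) + (s i)%:~R * (t - b i)].

Definition has_rslope (g : R -> R) (t : R) (s : int) : Prop :=
  exists2 eps : R, 0 < eps & forall h, 0 < h < eps -> g (t + h) = g t + s%:~R * h.
Definition has_lslope (g : R -> R) (t : R) (s : int) : Prop :=
  exists2 eps : R, 0 < eps & forall h, 0 < h < eps -> g (t - h) = g t - s%:~R * h.
Definition rslope (g : R -> R) (t : R) : int := epsilon (inhabits 0) (has_rslope g t).
Definition lslope (g : R -> R) (t : R) : int := epsilon (inhabits 0) (has_lslope g t).

(* outgoing slope of f at the endpoint 0 (= src e) and M e (= tgt e) of e *)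
Definition out0 (f : point -> R) (e : E) : int := rslope (fe f e) 0.
Definition out1 (f : point -> R) (e : E) : int := - lslope (fe f e) (M e).

(* ord_x(f) = sum of outgoing slopes; (f) = sum_x ord_x(f) x *)
Definition pdiv (f : point -> R) (x : point) : int :=
  match x with
  | PV v => \sum_(e | src e == v) out0 f e + \sum_(e | tgt e == v) out1 f e
  | PE e t => if interior e t then rslope (fe f e) t - lslope (fe f e) t else 0
  end.

Definition addpdiv (D : point -> int) (f : point -> R) : point -> int :=
  fun x => D x + pdiv f x.

Definition RD (D : point -> int) (f : point -> R) : Prop :=
  ratfun f /\ effective (addpdiv D f).

Definition linsys (D : point -> int) (L : point -> int) : Prop :=
  exists2 f, RD D f & L = addpdiv D f.

(* Cell data: (d_v)_v, for each edge a (possibly empty) ordered partition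
   (the empty sequence meaning "no partition on e"), and (m_e)_e. *)
Definition cdata := ({ffun V -> nat} * {ffun E -> seq nat} * {ffun E -> int})%type.
Definition cd_v (c : cdata) := c.1.1.
Definition cd_p (c : cdata) := c.1.2.
Definition cd_m (c : cdata) := c.2.

(* L|_{e°} = sum_i p_i x_i with 0 < x_1 < ... < x_r < M e
   (for p = [::] this says L|_{e°} = 0) *)
Definition edge_conf (L : point -> int) (e : E) (p : seq nat) : Prop :=
  exists x : nat -> R,
    [/\ forall i, (i.+1 < size p)%N -> x i < x i.+1,
        (0 < size p)%N -> 0 < x 0%N /\ x (size p).-1 < M e &
        forall t, interior e t ->
          L (PE e t) = (\sum_(i < size p | x i == t) (nth 0%N p i)%:Z)].

Definition in_cell (D : point -> int) (c : cdata) (L : point -> int) : Prop :=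
  [/\ linsys D L,
      forall v, L (PV v) = (cd_v c v)%:Z,
      forall e, edge_conf L e (cd_p c e) &
      forall f, RD D f -> L = addpdiv D f -> forall e, out0 f e = cd_m c e].

Definition is_cell (D : point -> int) (c : cdata) : Prop :=
  (forall e, all (fun k => 0 < k)%N (cd_p c e)) /\ exists L, in_cell D c L.

Definition anchor_divisor (L : point -> int) : Prop :=
  forall e t1 t2, interior e t1 -> interior e t2 ->
    0 < L (PE e t1) -> 0 < L (PE e t2) -> t1 = t2.

Definition is_anchor_cell (D : point -> int) (c : cdata) : Prop :=
  is_cell D c /\ forall L, in_cell D c L -> anchor_divisor L.

Definition s_anchor (c : cdata) : nat :=
  \sum_(e : E) (if cd_p c e is [:: k] then k.-1 else 0%N).

(* number of connected components of Gamma \ I_L, where k e is the number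
   of interior points of e at which L is positive: each edge with k e >= 1
   points removed contributes (k e - 1) open segments not containing a vertex,
   the rest is the graph on V with the edges not meeting I_L. *)
Definition ncomp_compl (L : point -> int) (n : nat) : Prop :=
  exists k : E -> nat,
    (forall e, exists s : seq R,
        [/\ uniq s, size s = k e &
            forall t, (t \in s) = interior e t && (0 < L (PE e t))]) /\
    n = (\sum_(e : E) (k e).-1 +
         n_comp (fun u v : V => [exists e : E, (k e == 0%N) &&
                   (((src e == u) && (tgt e == v)) || ((src e == v) && (tgt e == u)))])
                [pred _ : V | true])%N.

Definition cell_dim (D : point -> int) (c : cdata) (k : nat) : Prop :=
  exists2 L, in_cell D c L & ncomp_compl L k.+1.

End MetricGraph.

(* Main.v *)
Require Import Defs.
From HB Require Import structures.
From mathcomp Require Import all_boot all_order all_algebra.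
From mathcomp Require Import reals.
From mathcomp Require Import ring lra zify.
From Stdlib Require Import ClassicalEpsilon FunctionalExtensionality.
Import Order.TTheory GRing.Theory Num.Theory.
Local Open Scope ring_scope.
Set Implicit Arguments.
Unset Strict Implicit.
Unset Printing Implicit Defensive.

Section Comp.

Definition incrh (s : seq nat) : seq nat := if s is h :: t then h.+1 :: t else s.
Fixpoint cob (bs : seq bool) : seq nat :=
  if bs is b :: bs' then (if b then 1%N :: cob bs' else incrh (cob bs')) else [:: 1%N].

Lemma cob_cons bs : exists h t, cob bs = h :: t /\ (0 < h)%N.
Proof.
elim: bs => [|b bs [h [t [E hh]]]] /=; first by exists 1%N, [::].
by case: b; [exists 1%N, (h :: t); rewrite E | exists h.+1, t; rewrite E]; split.
Qed.

Lemma cob_sum bs : sumn (cob bs) = (size bs).+1.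
Proof.
elim: bs => [|b bs IH] //=; case: b => /=; first by rewrite IH.
have [h [t [E _]]] := cob_cons bs; move: IH; rewrite E /= => <-; by rewrite addSn.
Qed.

Lemma cob_pos bs : all (fun k => 0 < k)%N (cob bs).
Proof.
elim: bs => [|b bs IH] //=; case: b => //=.
by have [h [t [E _]]] := cob_cons bs; move: IH; rewrite E /= => /andP[_ ->].
Qed.

Lemma cob_size bs : size (cob bs) = (count id bs).+1.
Proof.
elim: bs => [|b bs IH] //=; case: b => /=; first by rewrite IH.
by have [h [t [E _]]] := cob_cons bs; move: IH; rewrite E /= add0n.
Qed.

Lemma cob_inj : injective cob.
Proof.
elim=> [|b1 bs1 IH] [|b2 bs2] //=.
- have [h [t [E hh]]] := cob_cons bs2; case: b2; rewrite /= ?E /=.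
    by move/(congr1 size) => /=; lia.
  by move/(congr1 (head 0%N)) => /=; lia.
- have [h [t [E hh]]] := cob_cons bs1; case: b1; rewrite /= ?E /=.
    by move/(congr1 size) => /=; lia.
  by move/(congr1 (head 0%N)) => /=; lia.
- have [h1 [t1 [E1 hh1]]] := cob_cons bs1; have [h2 [t2 [E2 hh2]]] := cob_cons bs2.
  case: b1; case: b2 => /=.
  + by move=> [Hc]; rewrite (IH _ Hc).
  + by rewrite E2 /=; move/(congr1 (head 0%N)) => /=; lia.
  + by rewrite E1 /=; move/(congr1 (head 0%N)) => /=; lia.
  + rewrite E1 E2 /= => -[Hh Ht].
    have : cob bs1 = cob bs2 by rewrite E1 E2 Hh Ht.
    by move/IH => ->.
Qed.

Lemma sum_pos_nil' (q : seq nat) : all (fun k => 0 < k)%N q -> sumn q = 0%N -> q = [::].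
Proof. by case: q => //= h t /andP[hh _]; lia. Qed.

Lemma cob_surj n q : all (fun k => 0 < k)%N q -> sumn q = n.+1 ->
  exists bs, size bs = n /\ cob bs = q.
Proof.
elim: n q => [|n IH] [|h t] //= /andP[hh ht] hs.
- have h1 : h = 1%N by lia.
  have t0 : t = [::] by apply: sum_pos_nil' => //; lia.
  by exists [::]; rewrite h1 t0.
- case: h hh hs => [|[|h']] // _ hs.
    have [bs [hb hc]] := IH t ht (ltac:(lia)).
    by exists (true :: bs); rewrite /= hb hc.
  have [bs [hb hc]] := IH (h'.+1 :: t) (ltac:(by rewrite /= ht)) (ltac:(rewrite /=; lia)).
  by exists (false :: bs); rewrite /= hb hc.
Qed.

End Comp.
Section Gen.
Variable R : realType.
Implicit Types (g : R -> R) (t u w Mx a : R).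

Definition pw g Mx n (b : nat -> R) (s : nat -> int) :=
  [/\ b 0%N = 0, b n = Mx, (forall i, (i < n)%N -> b i < b i.+1) &
      forall i t, (i < n)%N -> b i <= t <= b i.+1 -> g t = g (b i) + (s i)%:~R * (t - b i)].

Lemma pw_b_le g Mx n b s : pw g Mx n b s -> forall i j, (i <= j)%N -> (j <= n)%N -> b i <= b j.
Proof.
move=> [_ _ hinc _] i j; elim: j => [|j IH] hij hjn.
  by rewrite leqn0 in hij; rewrite (eqP hij).
rewrite leq_eqVlt in hij; case/orP: hij => [/eqP->//|hij].
rewrite ltnS in hij; apply: le_trans (IH hij (ltnW hjn)) _.
exact/ltW/hinc.
Qed.

Lemma pw_b_lt g Mx n b s : pw g Mx n b s -> forall i j, (i < j)%N -> (j <= n)%N -> b i < b j.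
Proof.
move=> hp i j hij hjn; have [_ _ hinc _] := hp.
apply: lt_le_trans (hinc i (leq_trans hij hjn)) _.
exact: (pw_b_le hp).
Qed.

Lemma pw_bnd g Mx n b s : pw g Mx n b s -> forall i, (i <= n)%N -> 0 <= b i <= Mx.
Proof.
move=> hp i hi; have [h0 hn _ _] := hp.
rewrite -{1}h0 -hn; apply/andP; split; exact: (pw_b_le hp).
Qed.

Lemma two_pos (e1 e2 : R) : 0 < e1 -> 0 < e2 -> exists h, 0 < h < e1 /\ 0 < h < e2.
Proof.
move=> h1 h2; case: (leP e1 e2) => h.
  by exists (e1/2); split; apply/andP; split; lra.
by exists (e2/2); split; apply/andP; split; lra.
Qed.

Lemma rslope_uniq g t s1 s2 : has_rslope g t s1 -> has_rslope g t s2 -> s1 = s2.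
Proof.
move=> [e1 he1 H1] [e2 he2 H2].
have [h [/andP[h0 h1] /andP[_ h2]]] := two_pos he1 he2.
have E1 := H1 h; have E2 := H2 h; rewrite h0 h1 h2 /= in E1 E2.
have E1' := E1 isT; have E2' := E2 isT.
have: (s1%:~R - s2%:~R) * h = 0 :> R by rewrite mulrBl; lra.
move/eqP; rewrite mulf_eq0 (gt_eqF h0) orbF subr_eq0 => /eqP; exact: intr_inj.
Qed.

Lemma lslope_uniq g t s1 s2 : has_lslope g t s1 -> has_lslope g t s2 -> s1 = s2.
Proof.
move=> [e1 he1 H1] [e2 he2 H2].
have [h [/andP[h0 h1] /andP[_ h2]]] := two_pos he1 he2.
have E1 := H1 h; have E2 := H2 h; rewrite h0 h1 h2 /= in E1 E2.
have E1' := E1 isT; have E2' := E2 isT.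
have: (s1%:~R - s2%:~R) * h = 0 :> R by rewrite mulrBl; lra.
move/eqP; rewrite mulf_eq0 (gt_eqF h0) orbF subr_eq0 => /eqP; exact: intr_inj.
Qed.

Lemma rslopeE g t s : has_rslope g t s -> rslope g t = s.
Proof.
move=> H; rewrite /rslope.
have H' := epsilon_spec (inhabits 0) (has_rslope g t) (ex_intro _ s H).
exact: rslope_uniq H' H.
Qed.

Lemma lslopeE g t s : has_lslope g t s -> lslope g t = s.
Proof.
move=> H; rewrite /lslope.
have H' := epsilon_spec (inhabits 0) (has_lslope g t) (ex_intro _ s H).
exact: lslope_uniq H' H.
Qed.

Lemma pw_rs g Mx n b s i t : pw g Mx n b s -> (i < n)%N -> b i <= t < b i.+1 ->
  rslope g t = s i.
Proof.
move=> hp hi /andP[h1 h2]; apply: rslopeE; have [_ _ _ hpc] := hp.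
exists (b i.+1 - t); first by rewrite subr_gt0.
move=> h /andP[hh1 hh2].
rewrite (hpc i (t+h) hi); last by apply/andP; split; lra.
rewrite (hpc i t hi); last by apply/andP; split; lra.
ring.
Qed.

Lemma pw_ls g Mx n b s i t : pw g Mx n b s -> (i < n)%N -> b i < t <= b i.+1 ->
  lslope g t = s i.
Proof.
move=> hp hi /andP[h1 h2]; apply: lslopeE; have [_ _ _ hpc] := hp.
exists (t - b i); first by rewrite subr_gt0.
move=> h /andP[hh1 hh2].
rewrite (hpc i (t-h) hi); last by apply/andP; split; lra.
rewrite (hpc i t hi); last by apply/andP; split; lra.
ring.
Qed.

Lemma pw_find g Mx n b s t : pw g Mx n b s -> 0 < Mx -> 0 <= t <= Mx ->
  exists2 i, (i < n)%N & b i <= t <= b i.+1.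
Proof.
move=> hp hM /andP[ht0 htM]; have [h0 hn hinc _] := hp.
have n0 : (0 < n)%N.
  case: n hp hn hinc => [|n'] // _ hn' _.
  by move: hM; rewrite -hn' h0 ltxx.
suff : forall j, (j <= n)%N -> t <= b j ->
    t <= 0 \/ exists2 i, (i < j)%N & b i <= t <= b i.+1.
  move=> /(_ n (leqnn n)); rewrite hn => /(_ htM) [ht|[i hi hti]]; last by exists i.
  exists 0%N => //; rewrite h0; apply/andP; split => //.
  have := hinc 0%N n0; rewrite h0; lra.
elim => [|j IH] hj htj; first by left; rewrite -h0.
case: (leP t (b j)) => h.
  by case: (IH (ltnW hj) h) => [|[i hi hti]]; [left|right; exists i => //; exact: ltnW].
by right; exists j => //; apply/andP; split => //; exact: ltW.
Qed.

Lemma pw_interior g Mx n b s t : pw g Mx n b s -> 0 < t < Mx ->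
  (exists i, [/\ (0 < i)%N, (i < n)%N & t = b i]) \/ (exists2 i, (i < n)%N & b i < t < b i.+1).
Proof.
move=> hp /andP[ht0 htM]; have [h0 hn hinc _] := hp.
have [i hi /andP[h1 h2]] := pw_find hp (lt_trans ht0 htM) (introT andP (conj (ltW ht0) (ltW htM))).
case: (eqVneq t (b i)) => [E|N1].
  left; exists i; split => //; case: i {hi h1 h2} E => // E.
  by rewrite h0 in E; rewrite E ltxx in ht0.
case: (eqVneq t (b i.+1)) => [E|N2].
  left; exists i.+1; split => //; rewrite ltn_neqAle hi andbT.
  by apply/eqP => Ei; rewrite E Ei hn ltxx in htM.
right; exists i => //; apply/andP; split; rewrite lt_neqAle ?h1 ?h2 ?andbT //.
  by rewrite eq_sym.
Qed.

Lemma pw_ext g g' Mx n b s : pw g Mx n b s -> (forall t, 0 <= t <= Mx -> g t = g' t) ->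
  pw g' Mx n b s.
Proof.
move=> hp he; have [h0 hn hinc hpc] := hp; split => // i t hi /andP[h1 h2].
have /andP[hb1 hb2] := pw_bnd hp (ltnW hi); have /andP[hb3 hb4] := pw_bnd hp hi.
rewrite -he; last by apply/andP; split; lra.
rewrite -he; last by apply/andP.
by apply: hpc => //; apply/andP.
Qed.

End Gen.
Section Prof.
Variable R : realType.
Implicit Types (g : R -> R) (t u w Mx a : R) (x : nat -> R) (p : seq nat).

Definition prof a (sg : int) x p t : R :=
  a + sg%:~R * t + \sum_(k < size p) (nth 0%N p k)%:R * (if x k <= t then t - x k else 0).
Definition slopeP (sg : int) x p u : int := sg + \sum_(k < size p | x k <= u) (nth 0%N p k)%:Z.
Definition mass p x t : int := \sum_(i < size p | x i == t) (nth 0%N p i)%:Z.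
Definition moment p x : R := \sum_(k < size p) (nth 0%N p k)%:R * x k.
Definition cfg_ok Mx p x : Prop :=
  [/\ forall i, (i.+1 < size p)%N -> x i < x i.+1,
      (0 < size p)%N -> 0 < x 0%N /\ x (size p).-1 < Mx &
      all (fun k => 0 < k)%N p].

Lemma sumn_ord p : sumn p = \sum_(k < size p) nth 0%N p k.
Proof. by rewrite sumnE (big_nth 0%N) big_mkord. Qed.

Lemma sumn_R p : (sumn p)%:R = \sum_(k < size p) (nth 0%N p k)%:R :> R.
Proof. by rewrite sumn_ord natr_sum. Qed.

Lemma sumn_Z p : (sumn p)%:Z = \sum_(k < size p) (nth 0%N p k)%:Z.
Proof. by rewrite sumn_ord (big_morph Posz PoszD (erefl _)). Qed.

Section Cfg.
Variables (Mx : R) (p : seq nat) (x : nat -> R).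
Hypothesis hc : cfg_ok Mx p x.

Lemma cfg_lt j k : (j < k)%N -> (k < size p)%N -> x j < x k.
Proof.
have [hinc _ _] := hc.
elim: k => [//|k IH] hjk hk.
rewrite leq_eqVlt in hjk; case/orP: hjk => [/eqP [->]|hjk]; first exact: hinc.
by apply: lt_trans (IH hjk (ltnW hk)) _; apply: hinc.
Qed.

Lemma cfg_le j k : (j <= k)%N -> (k < size p)%N -> x j <= x k.
Proof.
rewrite leq_eqVlt => /orP[/eqP->//|h] hk; exact/ltW/cfg_lt.
Qed.

Lemma cfg_in k : (k < size p)%N -> 0 < x k < Mx.
Proof.
move=> hk; have [_ hb _] := hc; have [h0 hM] := hb (leq_ltn_trans (leq0n k) hk).
apply/andP; split.
  by apply: lt_le_trans h0 _; apply: cfg_le.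
apply: le_lt_trans hM; apply: cfg_le; last by rewrite prednK // (leq_ltn_trans (leq0n k) hk).
by rewrite -ltnS prednK // (leq_ltn_trans (leq0n k) hk).
Qed.

Lemma cfg_leE j k : (j < size p)%N -> (k < size p)%N -> (x j <= x k) = (j <= k)%N.
Proof.
move=> hj hk; case: (ltngtP j k) => h.
- by apply/ltW/cfg_lt.
- by apply/negbTE; rewrite -ltNge; apply: cfg_lt.
- by rewrite h lexx.
Qed.

Lemma cfg_ltE j k : (j < size p)%N -> (k < size p)%N -> (x j < x k) = (j < k)%N.
Proof. by move=> hj hk; rewrite ltNge cfg_leE // ltnNge. Qed.

Lemma cfg_eqE j k : (j < size p)%N -> (k < size p)%N -> (x j == x k) = (j == k).
Proof. by move=> hj hk; rewrite eq_le !cfg_leE // -eqn_leq. Qed.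

Lemma cfg_pos k : (k < size p)%N -> (0 < nth 0%N p k)%N.
Proof. have [_ _ /all_nthP] := hc; exact. Qed.

Lemma mass_at k : (k < size p)%N -> mass p x (x k) = (nth 0%N p k)%:Z.
Proof.
move=> hk; rewrite /mass (big_pred1 (Ordinal hk)) // => i /=.
by rewrite cfg_eqE.
Qed.

End Cfg.

Lemma mass_none p x t : (forall k, (k < size p)%N -> x k != t) -> mass p x t = 0.
Proof. by move=> h; rewrite /mass big_pred0 // => i; rewrite (negbTE (h _ (ltn_ord i))). Qed.

Lemma mass_ge0 p x t : 0 <= mass p x t.
Proof. by apply: sumr_ge0. Qed.

Lemma mass_wit p x t : mass p x t != 0 -> exists2 k, (k < size p)%N & x k = t.
Proof.
move=> h; case: (boolP [exists k : 'I_(size p), x k == t]) => [/existsP[k /eqP hk]|/existsPn hn].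
  by exists k.
by rewrite mass_none ?eqxx in h => // k hk; have := hn (Ordinal hk).
Qed.

Lemma prof_lin a sg x p u w t :
  (forall k, (k < size p)%N -> ~~ ((u < x k) && (x k < w))) -> u <= t <= w ->
  prof a sg x p t = prof a sg x p u + (slopeP sg x p u)%:~R * (t - u).
Proof.
move=> hn /andP[hut htw]; rewrite /prof /slopeP rmorphD /= rmorph_sum /=.
rewrite mulrDl mulr_suml (big_mkcond (fun i : 'I_(size p) => x i <= u)) /=.
have -> : \sum_(k < size p) (nth 0%N p k)%:R * (if x k <= t then t - x k else 0) =
          \sum_(k < size p) ((nth 0%N p k)%:R * (if x k <= u then u - x k else 0) +
            (if x k <= u then (nth 0%N p k)%:Z%:~R * (t - u) else 0)) :> R.
  apply: eq_bigr => k _; have := hn k (ltn_ord k).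
  case: (leP (x k) u) => hu /=.
    move=> _; rewrite ifT; last by lra.
    rewrite -pmulrn; ring.
  move=> hw; rewrite mulr0 addr0.
  have hw' : w <= x k by move: hw; rewrite /= -leNgt.
  case: (leP (x k) t) => hkt; last by rewrite mulr0.
  have : x k = t by lra.
  by move=> ->; rewrite subrr mulr0.
rewrite big_split /=; ring.
Qed.

Lemma prof0 a sg x p : (forall k, (k < size p)%N -> 0 < x k) -> prof a sg x p 0 = a.
Proof.
move=> h; rewrite /prof mulr0 addr0 big1 ?addr0 // => k _.
by rewrite leNgt h // mulr0.
Qed.

Lemma profM a sg x p Mx : (forall k, (k < size p)%N -> x k <= Mx) ->
  prof a sg x p Mx = a + sg%:~R * Mx + (sumn p)%:R * Mx - moment p x.
Proof.
move=> h; rewrite /prof /moment sumn_R mulr_suml.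
rewrite (eq_bigr (fun k : 'I_(size p) => (nth 0%N p k)%:R * Mx - (nth 0%N p k)%:R * x k)).
  by rewrite sumrB; ring.
by move=> k _; rewrite h //; ring.
Qed.

Definition bP x r Mx (i : nat) : R := if i == 0%N then 0 else if (i <= r)%N then x i.-1 else Mx.
Definition sP (sg : int) p (i : nat) : int := sg + \sum_(k < size p | (k < i)%N) (nth 0%N p k)%:Z.

Section PP.
Variables (Mx : R) (p : seq nat) (x : nat -> R).
Hypothesis hc : cfg_ok Mx p x.
Hypothesis hM : 0 < Mx.

Lemma bP_nox k i : (k < size p)%N -> (i < (size p).+1)%N ->
  ~~ ((bP x (size p) Mx i < x k) && (x k < bP x (size p) Mx i.+1)).
Proof.
move=> hk hi; rewrite /bP; case: i hi => [|i] hi /=.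
  rewrite ifT; last by lia.
  by apply/negP => /andP[_ h]; rewrite (cfg_ltE hc) in h; lia.
rewrite ifT; last by lia.
apply/negP => /andP[h1 h2]; rewrite (cfg_ltE hc) in h1; try lia.
move: h2; case: ifP => h3 h2; last by lia.
by rewrite (cfg_ltE hc) in h2; lia.
Qed.

Lemma bP_slope sg i : (i < (size p).+1)%N -> slopeP sg x p (bP x (size p) Mx i) = sP sg p i.
Proof.
move=> hi; rewrite /slopeP /sP /bP; congr (_ + _); apply: eq_bigl => k.
case: i hi => [|i] hi /=.
  by rewrite leNgt; have /andP[-> _] := cfg_in hc (ltn_ord k).
rewrite ifT; last by lia.
by rewrite (cfg_leE hc) //; lia.
Qed.

Lemma prof_pw a sg : pw (prof a sg x p) Mx (size p).+1 (bP x (size p) Mx) (sP sg p).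
Proof.
split.
- by rewrite /bP eqxx.
- by rewrite /bP /= ltnn.
- move=> i hi; rewrite /bP; case: i hi => [|i] hi /=.
    case: ifP => h.
      by have /andP[] := cfg_in hc (k := 0%N) h.
    by [].
  rewrite ifT; last by lia.
  case: ifP => h.
    have [hinc _ _] := hc; exact: hinc.
  by have /andP[] := cfg_in hc (k := i) (ltac:(lia)).
- move=> i t hi ht; rewrite -bP_slope //.
  apply: prof_lin ht => k hk; exact: bP_nox.
Qed.

Lemma sP0 sg : sP sg p 0 = sg.
Proof. by rewrite /sP big_pred0 ?addr0. Qed.

Lemma sPr sg : sP sg p (size p) = sg + (sumn p)%:Z.
Proof. by rewrite /sP sumn_Z; congr (_ + _); apply: eq_bigl => k; rewrite ltn_ord. Qed.

Lemma sPS sg i (hi : (i < size p)%N) : sP sg p i.+1 = sP sg p i + (nth 0%N p i)%:Z.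
Proof.
rewrite /sP -addrA; congr (_ + _).
rewrite (bigID (fun k : 'I_(size p) => (k < i)%N)) /=; congr (_ + _).
  by apply: eq_bigl => k; case: (ltngtP k i) => h; rewrite ?andbT ?andbF //; lia.
rewrite (big_pred1 (Ordinal hi)) // => k /=.
rewrite -(inj_eq val_inj) /=.
case: (ltngtP k i) => h; rewrite ?andbT ?andbF //=; try by lia.
all: by apply/negbTE; lia.
Qed.

Lemma prof_slopes g a sg : (forall t, 0 <= t <= Mx -> g t = prof a sg x p t) ->
  [/\ rslope g 0 = sg, lslope g Mx = sg + (sumn p)%:Z &
      forall t, 0 < t < Mx -> rslope g t - lslope g t = mass p x t].
Proof.
move=> he; have hp := pw_ext (prof_pw a sg) (fun t ht => esym (he t ht)).
split.
- rewrite (pw_rs (i := 0%N) hp) ?sP0 //.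
  have h := pw_b_lt hp (i := 0%N) (j := 1%N) isT isT.
  have h0 : bP x (size p) Mx 0 = 0 by [].
  by rewrite h0 in h; rewrite h0 lexx h.
- rewrite (pw_ls (i := size p) hp) ?sPr //.
  have h := pw_b_lt hp (i := size p) (j := (size p).+1) (ltnSn _) (leqnn _).
  have h0 : bP x (size p) Mx (size p).+1 = Mx by rewrite /bP /= ltnn.
  by rewrite h0 in h; rewrite h0 lexx h.
- move=> t ht; case: (pw_interior hp ht) => [[i [hi0 hin ->]]|[i hi /andP[h1 h2]]].
    case: i hi0 hin => // i _ hin.
    have -> : rslope g (bP x (size p) Mx i.+1) = sP sg p i.+1.
      by apply: (pw_rs hp) => //; rewrite lexx /=; apply: (pw_b_lt hp).
    have -> : lslope g (bP x (size p) Mx i.+1) = sP sg p i.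
      apply: (pw_ls hp); first by lia.
      by rewrite lexx andbT; apply: (pw_b_lt hp) => //; lia.
    rewrite sPS; last by lia.
    rewrite {1}/bP /= ifT; last by lia.
    by rewrite (mass_at hc); [rewrite addrC addKr | lia].
  rewrite (pw_rs (i := i) hp) //; last by rewrite ltW.
  rewrite (pw_ls (i := i) hp) //; last by rewrite h1 ltW.
  rewrite subrr mass_none // => k hk; apply/eqP => E.
  by have := bP_nox hk hi; rewrite E h1 h2.
Qed.

End PP.

Lemma prof_char g Mx n b s p x sg : 0 < Mx -> pw g Mx n b s -> cfg_ok Mx p x -> rslope g 0 = sg ->
  (forall t, 0 < t < Mx -> rslope g t - lslope g t = mass p x t) ->
  forall t, 0 <= t <= Mx -> g t = prof (g 0) sg x p t.
Proof.
move=> hM hp hc hs0 hdiv.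
have [hb0 hbn hinc hpc] := hp.
have nox : forall i k, (i < n)%N -> (k < size p)%N -> ~~ ((b i < x k) && (x k < b i.+1)).
  move=> i k hi hk; apply/negP => /andP[h1 h2].
  have /andP[hbi _] := pw_bnd hp (ltnW hi).
  have /andP[_ hbi1] := pw_bnd hp hi.
  have := hdiv (x k); rewrite (mass_at hc hk).
  rewrite (pw_rs (i:=i) hp) //; last by rewrite (ltW h1) h2.
  rewrite (pw_ls (i:=i) hp) //; last by rewrite h1 (ltW h2).
  rewrite subrr => H.
  have : (0:int) = (nth 0%N p k)%:Z by apply: H; apply/andP; split; lra.
  by move=> [E]; have := cfg_pos hc hk; rewrite -E.
have sl : forall i, (i < n)%N -> s i = slopeP sg x p (b i).
  elim => [|i IH] hi.
    rewrite hb0 /slopeP big_pred0 ?addr0; last first.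
      by move=> k; rewrite leNgt; have /andP[-> _] := cfg_in hc (ltn_ord k).
    have h : b 0%N <= 0 < b 1%N by rewrite hb0 lexx -hb0 hinc.
    by rewrite -hs0 (pw_rs hp hi h).
  have hi' : (i < n)%N by exact: ltnW.
  set t := b i.+1.
  have hbt : b i < t := hinc i hi'.
  have hint : 0 < t < Mx.
    apply/andP; split; first by rewrite -hb0; apply: (pw_b_lt hp).
    by rewrite -hbn; apply: (pw_b_lt hp).
  have hr : rslope g t = s i.+1 by apply: (pw_rs hp hi); rewrite lexx hinc.
  have hl : lslope g t = s i by apply: (pw_ls hp hi'); rewrite lexx hbt.
  have := hdiv t hint; rewrite hr hl => hd.
  have -> : s i.+1 = s i + mass p x t by rewrite -hd addrC subrK.
  rewrite IH // /slopeP /mass -addrA; congr (_ + _).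
  rewrite (big_mkcond (fun k : 'I_(size p) => x k <= b i)).
  rewrite (big_mkcond (fun k : 'I_(size p) => x k == t)).
  rewrite (big_mkcond (fun k : 'I_(size p) => x k <= t)) -big_split; apply: eq_bigr => k _ /=.
  have := nox i k hi' (ltn_ord k).
  case: (leP (x k) (b i)) => h1 /=.
    move=> _; rewrite (lt_eqF (le_lt_trans h1 hbt)) ifT ?addr0 //.
    exact: (le_trans h1 (ltW hbt)).
  move=> h2; rewrite -leNgt in h2; rewrite add0r.
  case: (eqVneq (x k) t) => E; first by rewrite E lexx.
  by rewrite leNgt lt_neqAle eq_sym E h2.
have val : forall i, (i <= n)%N -> g (b i) = prof (g 0) sg x p (b i).
  elim => [|i IH] hi; first by rewrite hb0 prof0 // => k hk; have /andP[] := cfg_in hc hk.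
  rewrite (hpc i (b i.+1) hi); last by rewrite lexx andbT ltW // hinc.
  rewrite IH ?(ltnW hi) // sl //.
  symmetry; apply: prof_lin; first by move=> k hk; exact: nox.
  by rewrite lexx andbT ltW // hinc.
move=> t ht; have [i hi hti] := pw_find hp hM ht.
rewrite (hpc i t hi hti) val ?(ltnW hi) // sl //.
by symmetry; apply: prof_lin hti => k hk; exact: nox.
Qed.

End Prof.

Section Spread.
Variable R : realType.

Lemma sum_pos_nil (q : seq nat) : all (fun k => 0 < k)%N q -> sumn q = 0%N -> q = [::].
Proof. by case: q => //= h t /andP[hh _]; lia. Qed.

Lemma aux_b1 (a m r : R) : a <= r - 1 -> 0 <= m -> a - m < r.
Proof. move=> *; lra. Qed.
Lemma aux_b2 (a m r : R) : 0 <= a -> m <= r - 1 -> - r < a - m.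
Proof. move=> *; lra. Qed.
Lemma aux_b3 (A D X Mx : R) : A < D -> - D < A -> D <= X -> D <= Mx - X -> 0 < X + A < Mx.
Proof. move=> *; apply/andP; split; lra. Qed.

Lemma aux_min (a b : R) : 0 < a -> 0 < b -> exists d, [/\ 0 < d, d <= a & d <= b].
Proof.
move=> ha hb; case: (leP a b) => h; [exists a | exists b]; split => //; exact: ltW.
Qed.

Lemma exists_cfg (Mx : R) p x q : 0 < Mx -> cfg_ok Mx p x -> all (fun k => 0 < k)%N q ->
  sumn q = sumn p -> exists y, cfg_ok Mx q y /\ moment q y = moment p x.
Proof.
move=> hM hc hq hs.
case: (posnP (size p)) => hp0.
  have p0 : p = [::] by apply/nilP; rewrite /nilp hp0.
  have q0 : q = [::] by apply: sum_pos_nil => //; rewrite hs p0.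
  exists (fun _ => 0); rewrite p0 q0 /moment !big_ord0; split => //.
set C := (sumn p)%:R : R.
have hpos0 := cfg_pos hc hp0.
have hC : 0 < C.
  rewrite /C ltr0n; case: p hp0 hpos0 {hc hs C} => //= h t _ h0; lia.
have hCq : (sumn q)%:R = C by rewrite hs.
set xb := moment p x / C.
set r := (size p).-1.
have hr : (r < size p)%N by rewrite /r prednK.
have mlow : C * x 0%N <= moment p x.
  rewrite /C sumn_R mulr_suml /moment; apply: ler_sum => k _.
  by apply: ler_wpM2l; [rewrite ler0n | apply: (cfg_le hc)].
have mhigh : moment p x <= C * x r.
  rewrite /C sumn_R mulr_suml /moment; apply: ler_sum => k _.
  apply: ler_wpM2l; [rewrite ler0n | apply: (cfg_le hc)] => //.
  by rewrite /r -ltnS prednK.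
have /andP[hx0 _] := cfg_in hc hp0.
have /andP[_ hxr] := cfg_in hc hr.
have hxb1 : x 0%N <= xb by rewrite /xb ler_pdivlMr // mulrC.
have hxb2 : xb <= x r by rewrite /xb ler_pdivrMr // mulrC.
have [d [hd0 hd1 hd2]] : exists d : R, [/\ 0 < d, d <= xb & d <= Mx - xb].
  apply: aux_min; first exact: lt_le_trans hx0 hxb1.
  by rewrite subr_gt0; exact: le_lt_trans hxb2 hxr.
have hsp : (0 < sumn p)%N by move: hC; rewrite /C ltr0n.
have hq0 : (0 < size q)%N.
  case: q hq hs hCq => [|h t] //= _ hs' _.
  by move: hsp; rewrite -hs'.
set rr := (size q)%:R : R.
have hrr : 0 < rr by rewrite /rr ltr0n.
set e := d / rr.
have he : 0 < e by rewrite /e divr_gt0.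
have hed : e * rr = d by rewrite /e divfK // gt_eqF.
set S := \sum_(k < size q) (nth 0%N q k)%:R * k%:R : R.
set mu := S / C.
have hS0 : 0 <= S by apply: sumr_ge0 => k _; rewrite mulr_ge0 ?ler0n.
have hrr1 : rr - 1 = ((size q).-1)%:R by rewrite /rr -{1}(prednK hq0) -addn1 natrD addrK.
have hS1 : S <= C * (rr - 1).
  rewrite -hCq sumn_R mulr_suml; apply: ler_sum => k _.
  apply: ler_wpM2l; first by rewrite ler0n.
  by rewrite hrr1 ler_nat -ltnS prednK.
have hmu0 : 0 <= mu by rewrite /mu divr_ge0 // ltW.
have hmu1 : mu <= rr - 1 by rewrite /mu ler_pdivrMr // mulrC.
exists (fun k => xb + e * (k%:R - mu)); split; last first.
  rewrite /moment.
  rewrite (eq_bigr (fun k : 'I_(size q) => xb * (nth 0%N q k)%:R + e * ((nth 0%N q k)%:R * k%:R) - e * mu * (nth 0%N q k)%:R)); last by move=> k _; ring.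
  rewrite sumrB big_split /= -!mulr_sumr -sumn_R -/S hCq /mu /xb.
  rewrite -/(moment p x) divfK ?gt_eqF // -mulrA divfK ?gt_eqF //; ring.
have hbound : forall k, (k < size q)%N -> 0 < xb + e * (k%:R - mu) < Mx.
  move=> k hk.
  have hk1 : k%:R <= rr - 1 by rewrite hrr1 ler_nat -ltnS prednK.
  have hk0 : 0 <= k%:R :> R by rewrite ler0n.
  have h1 : e * (k%:R - mu) < e * rr by rewrite ltr_pM2l //; apply: aux_b1.
  have h2 : e * (- rr) < e * (k%:R - mu) by rewrite ltr_pM2l //; apply: aux_b2.
  rewrite mulrN hed in h2; rewrite hed in h1.
  exact: (aux_b3 h1 h2 hd1 hd2).
split => //.
- by move=> i hi; rewrite ltrD2l ltr_pM2l // ltrD2r ltr_nat.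
- move=> _; split; first by have /andP[] := hbound 0%N hq0.
  have hk : ((size q).-1 < size q)%N by rewrite prednK.
  by have /andP[] := hbound _ hk.
Qed.

End Spread.

Section Graph.
Variables (R : realType) (V E : finType) (src tgt : E -> V) (M : E -> R).
Hypothesis hM : forall e, 0 < M e.
Variable D : point R V E -> int.
Hypothesis hvs : vertex_supported D.

Definition ecw (L : point R V E -> int) e p (x : nat -> R) : Prop :=
  cfg_ok (M e) p x /\ forall t, interior M e t -> L (PE V e t) = mass p x t.

Lemma edge_confP L e p : all (fun k => 0 < k)%N p -> edge_conf M L e p -> exists x, ecw L e p x.
Proof. by move=> hp [x [h1 h2 h3]]; exists x; split => //; split. Qed.

Lemma ecw_conf L e p x : ecw L e p x -> edge_conf M L e p.
Proof. by move=> [[h1 h2 _] h3]; exists x; split. Qed.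

Lemma addpdiv_PE f e t : interior M e t ->
  addpdiv src tgt M D f (PE V e t) = rslope (fe src tgt M f e) t - lslope (fe src tgt M f e) t.
Proof. by move=> hi; rewrite /addpdiv hvs add0r /pdiv /= hi. Qed.

Lemma addpdiv_junk f e t : ~~ interior M e t -> addpdiv src tgt M D f (PE V e t) = 0.
Proof. by move=> hi; rewrite /addpdiv hvs add0r /pdiv /= (negbTE hi). Qed.

Lemma ratfun_pw f e : ratfun src tgt M f -> exists n b s, pw (fe src tgt M f e) (M e) n b s.
Proof. by move=> hf; have [n [b [s [h1 h2 h3 h4]]]] := hf e; exists n, b, s; split. Qed.

Lemma fe0 f e : fe src tgt M f e 0 = f (PV R E (src e)).
Proof. by rewrite /fe lexx. Qed.

Lemma feM f e : fe src tgt M f e (M e) = f (PV R E (tgt e)).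
Proof. by rewrite /fe lexx leNgt hM. Qed.

Lemma fe_char f p x e : ratfun src tgt M f -> ecw (addpdiv src tgt M D f) e p x ->
  forall t, 0 <= t <= M e ->
    fe src tgt M f e t = prof (f (PV R E (src e))) (out0 src tgt M f e) x p t.
Proof.
move=> hf [hc hL]; have [n [b [s hp]]] := ratfun_pw e hf.
rewrite -fe0; apply: (prof_char (hM e) hp hc) => // t ht.
by rewrite -addpdiv_PE // hL.
Qed.

Lemma out1_of f p x e : ratfun src tgt M f -> ecw (addpdiv src tgt M D f) e p x ->
  out1 src tgt M f e = - (out0 src tgt M f e + (sumn p)%:Z).
Proof.
move=> hf hw; have [hc _] := hw.
by rewrite /out1; have [_ -> _] := prof_slopes hc (hM e) (fe_char hf hw).
Qed.

Definition reprof (f : point R V E -> R) (q : E -> seq nat) (y : E -> nat -> R) : point R V E -> R :=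
  fun z => match z with
           | PV v => f (PV R E v)
           | PE e t => prof (f (PV R E (src e))) (out0 src tgt M f e) (y e) (q e) t
           end.

Lemma reprof_spec f p x q y : RD src tgt M D f ->
  (forall e, ecw (addpdiv src tgt M D f) e (p e) (x e)) ->
  (forall e, cfg_ok (M e) (q e) (y e)) -> (forall e, sumn (q e) = sumn (p e)) ->
  (forall e, moment (q e) (y e) = moment (p e) (x e)) ->
  [/\ RD src tgt M D (reprof f q y),
      forall v, addpdiv src tgt M D (reprof f q y) (PV R E v) = addpdiv src tgt M D f (PV R E v),
      forall e, ecw (addpdiv src tgt M D (reprof f q y)) e (q e) (y e),
      forall e, out0 src tgt M (reprof f q y) e = out0 src tgt M f e &
      forall e, out1 src tgt M (reprof f q y) e = out1 src tgt M f e].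
Proof.
move=> [hf heff] hw hc hs hm.
set f' := reprof f q y.
have hfe : forall e t, 0 <= t <= M e ->
    fe src tgt M f' e t = prof (f (PV R E (src e))) (out0 src tgt M f e) (y e) (q e) t.
  move=> e t /andP[h0 h1]; rewrite /fe.
  case: (leP t 0) => ht0.
    have -> : t = 0 by apply/eqP; rewrite eq_le ht0 h0.
    by rewrite prof0 // => k hk; have /andP[] := cfg_in (hc e) hk.
  case: (leP (M e) t) => htM.
    have -> : t = M e by apply/eqP; rewrite eq_le htM h1.
    rewrite /f' /= -(feM f e) (fe_char hf (hw e)) ?lexx ?ltW ?hM //.
    have [hco _] := hw e.
    rewrite !profM ?hs ?hm // => k hk; first [by have /andP[_ /ltW] := cfg_in (hc e) hk | by have /andP[_ /ltW] := cfg_in hco hk].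
  by rewrite /f'.
have sl := fun e => prof_slopes (hc e) (hM e) (hfe e).
have h0 : forall e, out0 src tgt M f' e = out0 src tgt M f e.
  by move=> e; rewrite /out0; have [-> _ _] := sl e.
have h1 : forall e, out1 src tgt M f' e = out1 src tgt M f e.
  move=> e; rewrite (out1_of hf (hw e)) /out1; have [_ -> _] := sl e.
  by rewrite hs.
have hv : forall v, addpdiv src tgt M D f' (PV R E v) = addpdiv src tgt M D f (PV R E v).
  move=> v; rewrite /addpdiv /pdiv; congr (_ + (_ + _)); apply: eq_bigr => e _.
    exact: h0.
  exact: h1.
have hw' : forall e, ecw (addpdiv src tgt M D f') e (q e) (y e).
  move=> e; split => // t ht; rewrite addpdiv_PE //.
  by have [_ _ ->] := sl e.
split => //; split.
  move=> e; exists (size (q e)).+1, (bP (y e) (size (q e)) (M e)), (sP (out0 src tgt M f e) (q e)).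
  have [h1' h2' h3' h4'] := pw_ext (prof_pw (hc e) (hM e) (f (PV R E (src e))) (out0 src tgt M f e))
    (fun t ht => esym (hfe e t ht)).
  by split.
case=> [v|e t]; first by rewrite hv; apply: heff.
case: (boolP (interior M e t)) => hi.
  by have [_ ->] := hw' e; [apply: mass_ge0 | exact: hi].
by rewrite addpdiv_junk.
Qed.

Lemma div_ext f1 f2 p x :
  (forall v, addpdiv src tgt M D f1 (PV R E v) = addpdiv src tgt M D f2 (PV R E v)) ->
  (forall e, ecw (addpdiv src tgt M D f1) e (p e) (x e)) ->
  (forall e, ecw (addpdiv src tgt M D f2) e (p e) (x e)) ->
  addpdiv src tgt M D f1 = addpdiv src tgt M D f2.
Proof.
move=> hv h1 h2; apply: functional_extensionality => -[v|e t]; first exact: hv.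
case: (boolP (interior M e t)) => hi; last by rewrite !addpdiv_junk.
by rewrite (proj2 (h1 e) t hi) (proj2 (h2 e) t hi).
Qed.



Lemma transfer C1 L1 C2 : in_cell src tgt M D C1 L1 ->
  (forall e, all (fun k => 0 < k)%N (cd_p C1 e)) -> (forall e, all (fun k => 0 < k)%N (cd_p C2 e)) ->
  cd_v C2 = cd_v C1 -> cd_m C2 = cd_m C1 -> (forall e, sumn (cd_p C2 e) = sumn (cd_p C1 e)) ->
  exists N, in_cell src tgt M D C2 N /\ (forall v, N (PV R E v) = L1 (PV R E v)).
Proof.
move=> [[f hf hL1] hv hconf hm] hp1 hp2 hcv hcm hs; subst L1.
have [x hx] := fin_all_exists (fun e => edge_confP (hp1 e) (hconf e)).
have [y hy] := fin_all_exists (fun e => exists_cfg (hM e) (proj1 (hx e)) (hp2 e) (hs e)).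
have [hRD hv' hw' h0 h1] := reprof_spec hf hx (fun e => proj1 (hy e)) hs (fun e => proj2 (hy e)).
exists (addpdiv src tgt M D (reprof f (cd_p C2) y)); split; last by move=> v; rewrite hv'.
split.
- by exists (reprof f (cd_p C2) y).
- by move=> v; rewrite hv' hv hcv.
- by move=> e; apply: ecw_conf (hw' e).
- move=> g hg hNg e.
  have hwg : forall e, ecw (addpdiv src tgt M D g) e (cd_p C2 e) (y e) by move=> e'; rewrite -hNg.
  have [hRD2 hv2 hw2 h02 _] := reprof_spec hg hwg (fun e => proj1 (hx e)) (fun e => esym (hs e))
    (fun e => esym (proj2 (hy e))).
  rewrite -h02 hcm; apply: (hm _ hRD2).
  apply: (div_ext (p := cd_p C1) (x := x)) => //.
  by move=> v; rewrite hv2 -hNg hv'.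
Qed.

Lemma anchor_small C L : in_cell src tgt M D C L -> (forall e, (size (cd_p C e) <= 1)%N) ->
  anchor_divisor M L.
Proof.
move=> [_ _ hconf _] hs e t1 t2 h1 h2 p1 p2.
have [x [_ _ hL]] := hconf e.
move: p1 p2; rewrite (hL t1 h1) (hL t2 h2) !lt_def => /andP[n1 _] /andP[n2 _].
have [k1 hk1 <-] := mass_wit n1; have [k2 hk2 <-] := mass_wit n2.
have := hs e => hs1.
have -> : k1 = 0%N by lia.
by have -> : k2 = 0%N by lia.
Qed.

Lemma anchor_size C : is_anchor_cell src tgt M D C -> forall e, (size (cd_p C e) <= 1)%N.
Proof.
move=> [[hp [L hL]] ha] e; rewrite leqNgt; apply/negP => h2.
have hL' := hL; case: hL' => [_ _ hconf _].
have [x [hc hx]] := edge_confP (hp e) (hconf e).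
have h0 : (0 < size (cd_p C e))%N by exact: ltn_trans h2.
have hi0 := cfg_in hc h0; have hi1 := cfg_in hc h2.
have := ha L hL e (x 0%N) (x 1%N) hi0 hi1.
rewrite !hx // !(mass_at hc) // !ltz_nat !(cfg_pos hc) // => /(_ isT isT) Exx.
by have := cfg_lt hc (j := 0%N) (k := 1%N) isT h2; rewrite Exx ltxx.
Qed.

Lemma kcount L e p x : ecw L e p x -> exists s : seq R,
  [/\ uniq s, size s = size p & forall t, (t \in s) = interior M e t && (0 < L (PE V e t))].
Proof.
move=> [hc hL]; exists (map x (iota 0 (size p))); split.
- rewrite map_inj_in_uniq ?iota_uniq // => i j; rewrite !mem_iota !add0n => /andP[_ hi] /andP[_ hj] /eqP.
  by rewrite (cfg_eqE hc) // => /eqP.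
- by rewrite size_map size_iota.
- move=> t; apply/mapP/andP.
    move=> [i]; rewrite mem_iota add0n => /andP[_ hi] ->.
    have hint := cfg_in hc hi; split => //.
    by rewrite hL // (mass_at hc) // ltz_nat (cfg_pos hc).
  move=> [hint hpos]; rewrite hL // lt_def in hpos; case/andP: hpos => hne _.
  have [k hk hxk] := mass_wit hne.
  by exists k; [rewrite mem_iota add0n hk | rewrite hxk].
Qed.

Definition NC (k : E -> nat) : nat :=
  n_comp (fun u v : V => [exists e : E, (k e == 0%N) &&
                   (((src e == u) && (tgt e == v)) || ((src e == v) && (tgt e == u)))])
         [pred _ : V | true].

Lemma ncomp_iff C L n : in_cell src tgt M D C L -> (forall e, all (fun k => 0 < k)%N (cd_p C e)) ->
  (ncomp_compl src tgt M L n <->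
   n = (\sum_(e : E) (size (cd_p C e)).-1 + NC (fun e => size (cd_p C e)))%N).
Proof.
move=> [_ _ hconf _] hp.
have hx : forall e, exists x, ecw L e (cd_p C e) x := fun e => edge_confP (hp e) (hconf e).
split.
- move=> [k [hk ->]].
  have ek : k = (fun e => size (cd_p C e)).
    apply: functional_extensionality => e.
    have [s [u1 s1 m1]] := hk e; have [x hw] := hx e; have [s' [u2 s2 m2]] := kcount hw.
    rewrite -s1 -s2; apply: perm_size; apply: uniq_perm => // t; by rewrite m1 m2.
  by rewrite ek.
- move=> ->; exists (fun e => size (cd_p C e)); split => // e.
  have [x hw] := hx e; exact: kcount hw.
Qed.

Definition acell (c : cdata V E) : cdata V E :=
  ((cd_v c, [ffun e => if cd_p c e is [::] then [::] else [:: sumn (cd_p c e)]]), cd_m c).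

Lemma part1 C : is_cell src tgt M D C ->
  is_anchor_cell src tgt M D (acell C) /\
  forall L, in_cell src tgt M D C L ->
    exists N, [/\ in_cell src tgt M D (acell C) N,
                  forall v, N (PV R E v) = L (PV R E v) &
                  forall f g, RD src tgt M D f -> RD src tgt M D g ->
                    L = addpdiv src tgt M D f -> N = addpdiv src tgt M D g ->
                    forall e, out0 src tgt M f e = out0 src tgt M g e /\
                              out1 src tgt M f e = out1 src tgt M g e].
Proof.
move=> [hp [L0 hL0]].
have hpa : forall e, all (fun k => 0 < k)%N (cd_p (acell C) e).
  move=> e; have := hp e; rewrite /acell /cd_p /= ffunE.
  by case: (C.1.2 e) => //= a l /andP[ha _]; rewrite andbT; lia.
have hsa : forall e, sumn (cd_p (acell C) e) = sumn (cd_p C e).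
  by move=> e; rewrite /acell /cd_p /= ffunE; case: (C.1.2 e) => //= a l; rewrite addn0.
have htr : forall L, in_cell src tgt M D C L ->
    exists N, in_cell src tgt M D (acell C) N /\ forall v, N (PV R E v) = L (PV R E v).
  by move=> L hL; apply: (transfer hL hp hpa).
have hsz : forall e, (size (cd_p (acell C) e) <= 1)%N.
  by move=> e; rewrite /acell /cd_p /= ffunE; case: (C.1.2 e).
split.
  split; first by split => //; have [N [hN _]] := htr L0 hL0; exists N.
  by move=> L hL; exact: anchor_small hL hsz.
move=> L hL; have [N [hN hNv]] := htr L hL; exists N; split => //.
move=> f g hf hg hLf hNg e.
have [_ _ hcL hmL] := hL; have [_ _ hcN hmN] := hN.
have e0 : out0 src tgt M f e = out0 src tgt M g e by rewrite (hmL f hf hLf) (hmN g hg hNg).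
split => //.
have [x hx] := edge_confP (hp e) (hcL e); have [x' hx'] := edge_confP (hpa e) (hcN e).
rewrite hLf in hx; rewrite hNg in hx'.
by rewrite (out1_of hf.1 hx) (out1_of hg.1 hx') hsa e0.
Qed.



Lemma cdata_ext (c1 c2 : cdata V E) :
  cd_v c1 = cd_v c2 -> cd_p c1 = cd_p c2 -> cd_m c1 = cd_m c2 -> c1 = c2.
Proof. by case: c1 c2 => [[? ?] ?] [[? ?] ?]; rewrite /cd_v /cd_p /cd_m /= => -> -> ->. Qed.

Lemma NC_ext k1 k2 : (forall e, (k1 e == 0%N) = (k2 e == 0%N)) -> NC k1 = NC k2.
Proof.
move=> H; rewrite /NC; apply: (congr1 (fun r : rel V => n_comp r [pred _ : V | true])).
apply: functional_extensionality => u; apply: functional_extensionality => v.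
by apply: eq_existsb => e; rewrite H.
Qed.

Definition wA (A : cdata V E) (e : E) : nat := if cd_p A e is [:: c] then c.-1 else 0%N.
Local Notation TA A := {e : E & 'I_(wA A e)}.

Definition bitsA (A : cdata V E) (B : {set TA A}) (e : E) : seq bool :=
  [seq (Tagged (fun e => 'I_(wA A e)) i \in B) | i <- enum 'I_(wA A e)].

Definition phiA (A : cdata V E) (B : {set TA A}) : cdata V E :=
  ((cd_v A, [ffun e => if cd_p A e is [:: c] then cob (bitsA B e) else [::]]), cd_m A).

Lemma cardT_sig (A : cdata V E) : #|{: TA A}| = \sum_(e : E) wA A e.
Proof.
rewrite card_tagged sumnE big_map big_enum /=; apply: eq_bigr => e _; exact: card_ord.
Qed.

Section Fiber.
Variable A : cdata V E.
Hypothesis hpA : forall e, all (fun k => 0 < k)%N (cd_p A e).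
Hypothesis hsz : forall e, (size (cd_p A e) <= 1)%N.

Lemma Acases e : cd_p A e = [::] \/ exists c, [/\ cd_p A e = [:: c], (0 < c)%N & wA A e = c.-1].
Proof.
have := hsz e; have := hpA e; rewrite /wA.
case: (cd_p A e) => [|c [|c' l]] //=; first by left.
by move=> /andP[hc _] _; right; exists c.
Qed.

Lemma bits_size (B : {set TA A}) e : size (bitsA B e) = wA A e.
Proof. by rewrite /bitsA size_map size_enum_ord. Qed.

Lemma bits_nth (B : {set TA A}) e i (hi : (i < wA A e)%N) :
  nth false (bitsA B e) i = (Tagged (fun e => 'I_(wA A e)) (Ordinal hi) \in B).
Proof.
rewrite /bitsA (nth_map (Ordinal hi)) ?size_enum_ord //.
by congr (Tagged _ _ \in B); apply: val_inj => /=; rewrite nth_enum_ord.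
Qed.

Lemma sum_bits (B : {set TA A}) : (\sum_(e : E) count id (bitsA B e) = #|B|)%N.
Proof.
have -> : (\sum_(e : E) count id (bitsA B e) =
    \sum_(e : E) \sum_(j : 'I_(wA A e) | Tagged (fun e => 'I_(wA A e)) j \in B) 1)%N.
  apply: eq_bigr => e _; rewrite /bitsA count_map -sum1_count big_enum_cond; by [].
rewrite (@sig_big_dep _ _ _ E (fun e => 'I_(wA A e)) predT
  (fun e j => Tagged (fun e => 'I_(wA A e)) j \in B) (fun _ _ => 1%N)) /=.
by rewrite -sum1_card; apply: eq_bigl => -[e i].
Qed.

Lemma phi_p (B : {set TA A}) e :
  cd_p (phiA B) e = if cd_p A e is [:: c] then cob (bitsA B e) else [::].
Proof. by rewrite /phiA /cd_p /= ffunE. Qed.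

Lemma phi_sumn (B : {set TA A}) e : sumn (cd_p (phiA B) e) = sumn (cd_p A e).
Proof.
rewrite phi_p; case: (Acases e) => [->|[c [-> hc hw]]] //=.
by rewrite cob_sum bits_size hw prednK // addn0.
Qed.

Lemma phi_pos (B : {set TA A}) e : all (fun k => 0 < k)%N (cd_p (phiA B) e).
Proof. by rewrite phi_p; case: (Acases e) => [->|[c [-> hc hw]]] //=; apply: cob_pos. Qed.

Lemma phi_acell (B : {set TA A}) : acell (phiA B) = A.
Proof.
apply: cdata_ext => //; apply/ffunP => e; rewrite /acell /cd_p /= ffunE -/(cd_p (phiA B) e) phi_p.
case: (Acases e) => [->|[c [-> hc hw]]] //=.
have [h [t [Ec _]]] := cob_cons (bitsA B e); rewrite Ec -Ec cob_sum bits_size hw prednK //.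
Qed.

Lemma phi_inj : injective (@phiA A).
Proof.
move=> B1 B2 Heq.
have Hp : forall e, cd_p (phiA B1) e = cd_p (phiA B2) e by move=> e; rewrite Heq.
apply/setP => -[e i]; have He := Hp e; rewrite !phi_p in He.
case: (Acases e) => [Ae|[c [Ae hc hw]]].
  have h0 : wA A e = 0%N by rewrite /wA Ae.
  by have := leq_trans (ltn_ord i) (eq_leq h0).
rewrite Ae in He; have Hb := cob_inj He.
have := congr1 (fun s => nth false s i) Hb; rewrite /= !(bits_nth _ (ltn_ord i)).
by have -> : Ordinal (ltn_ord i) = i by apply: val_inj.
Qed.

Lemma phi_surj C : is_cell src tgt M D C -> acell C = A -> exists B : {set TA A}, C = phiA B.
Proof.
move=> [hpC _] hac.
have hae : forall e, (if cd_p C e is [::] then [::] else [:: sumn (cd_p C e)]) = cd_p A e.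
  by move=> e; rewrite -hac /acell /cd_p /= ffunE.
have hb : forall e, exists bs : seq bool, size bs = wA A e /\
    (forall c, cd_p A e = [:: c] -> cob bs = cd_p C e).
  move=> e; have := hae e; have := hpC e.
  case: (cd_p C e) => [|h t].
    by move=> _ hA; exists [::]; split => [|c]; rewrite /wA -hA.
  move=> hpos hA; rewrite /wA -hA.
  have hs : sumn (h :: t) = (sumn (h :: t)).-1.+1.
    by rewrite prednK //; move: hpos => /= /andP[hh _]; lia.
  have [bs [h1 h2]] := cob_surj hpos hs.
  by exists bs; split => // c _.
have [bs hbs] := fin_all_exists hb.
pose B : {set TA A} := [set x : TA A | nth false (bs (tag x)) (nat_of_ord (tagged x))].
have hbits : forall e, bitsA B e = bs e.
  move=> e; apply: (@eq_from_nth _ false); first by rewrite bits_size (proj1 (hbs e)).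
  move=> i; rewrite bits_size => hi; rewrite (bits_nth _ hi) inE.
  by [].
exists B; apply: cdata_ext.
- by have := congr1 (fun c => cd_v c) hac.
- apply/ffunP => e; rewrite -/(cd_p C e) -/(cd_p (phiA B) e) phi_p.
  have := hae e; case: (Acases e) => [->|[c [Ae hc hw]]].
    by case: (cd_p C e).
  by rewrite Ae hbits => _; symmetry; exact: (proj2 (hbs e) c Ae).
- by have := congr1 (fun c => cd_m c) hac.
Qed.

Lemma phi_dimsum (B : {set TA A}) : (\sum_(e : E) (size (cd_p (phiA B) e)).-1 = #|B|)%N.
Proof.
rewrite -sum_bits; apply: eq_bigr => e _; rewrite phi_p.
case: (Acases e) => [Ae|[c [Ae hc hw]]]; rewrite Ae; last by rewrite cob_size.
have : size (bitsA B e) = 0%N by rewrite bits_size /wA Ae.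
by case: (bitsA B e).
Qed.

Lemma phi_NC (B : {set TA A}) :
  NC (fun e => size (cd_p (phiA B) e)) = NC (fun e => size (cd_p A e)).
Proof.
apply: NC_ext => e; rewrite phi_p.
case: (Acases e) => [->|[c [-> hc hw]]] //=.
by have [h [t [-> _]]] := cob_cons (bitsA B e).
Qed.

Lemma A_dimsum : (\sum_(e : E) (size (cd_p A e)).-1 = 0)%N.
Proof. by rewrite big1 // => e _; have := hsz e; case: (size _) => [|[|]]. Qed.

End Fiber.

Lemma part2 A : is_anchor_cell src tgt M D A ->
       (exists s : seq (cdata V E),
          [/\ uniq s, size s = (2 ^ s_anchor A)%N &
              forall C, C \in s <-> (is_cell src tgt M D C /\ acell C = A)])
       /\
       forall dA j, cell_dim src tgt M D A dA -> (j <= s_anchor A)%N ->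
         exists s : seq (cdata V E),
           [/\ uniq s, size s = 'C(s_anchor A, j) &
               forall C, C \in s <->
                 [/\ is_cell src tgt M D C, acell C = A & cell_dim src tgt M D C (dA + j)]].
Proof.
move=> hA; have hsz := anchor_size hA; have [[hpA [N0 hN0]] _] := hA.
have hcell : forall B : {set TA A}, is_cell src tgt M D (phiA B).
  move=> B; split; first exact: phi_pos.
  have [N [hN _]] := transfer hN0 hpA (phi_pos hpA hsz B) (erefl _) (erefl _) (phi_sumn hpA hsz B).
  by exists N.
split.
  exists [seq phiA B | B <- enum (powerset [set: TA A])]; split.
  - by rewrite map_inj_uniq ?enum_uniq //; apply: phi_inj.
  - by rewrite size_map -cardE card_powerset cardsT cardT_sig.
  - move=> C; split.
      by move/mapP => [B _ ->]; split; [exact: hcell | exact: phi_acell].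
    move=> [hc ha]; have [B ->] := phi_surj hpA hsz hc ha.
    by apply/mapP; exists B => //; rewrite mem_enum powersetE subsetT.
move=> dA j [LA hLA hdA] hj.
have := (ncomp_iff _ hLA hpA).1 hdA; rewrite A_dimsum // add0n => hdA'.
have hdimB : forall (B : {set TA A}) k, cell_dim src tgt M D (phiA B) k <-> k.+1 = (#|B| + dA.+1)%N.
  move=> B k; split.
    move=> [L hL hn]; have := (ncomp_iff _ hL (phi_pos hpA hsz B)).1 hn.
    by rewrite phi_dimsum // phi_NC // -hdA'.
  move=> hk; have [_ [L hL]] := hcell B; exists L => //.
  by apply/(ncomp_iff _ hL (phi_pos hpA hsz B)); rewrite phi_dimsum // phi_NC // -hdA'.
exists [seq phiA B | B <- enum [set B : {set TA A} | #|B| == j]]; split.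
- by rewrite map_inj_uniq ?enum_uniq //; apply: phi_inj.
- by rewrite size_map -cardE card_draws cardT_sig.
- move=> C; split.
    move/mapP => [B]; rewrite mem_enum inE => /eqP hB ->; split.
    + exact: hcell.
    + exact: phi_acell.
    + by apply/hdimB; lia.
  move=> [hc ha hd]; have [B hCB] := phi_surj hpA hsz hc ha.
  rewrite hCB in hd; have := (hdimB B _).1 hd => hk.
  by apply/mapP; exists B => //; rewrite mem_enum inE; apply/eqP; lia.
Qed.

End Graph.

Unset Implicit Arguments.
Set Strict Implicit.

Theorem theorem2p12 (R : realType) (V E : finType) (src tgt : E -> V) (M : E -> R)
  (hM : forall e, 0 < M e) (hconn : connected_graph src tgt)
  (D : point R V E -> int) (hD : is_divisor M D) (heff : effective D)
  (hvs : vertex_supported D) :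
  exists a : cdata V E -> cdata V E,
    (forall C, is_cell src tgt M D C ->
       is_anchor_cell src tgt M D (a C) /\
       forall L, in_cell src tgt M D C L ->
         exists N, [/\ in_cell src tgt M D (a C) N,
                       forall v, N (PV R E v) = L (PV R E v) &
                       forall f g, RD src tgt M D f -> RD src tgt M D g ->
                         L = addpdiv src tgt M D f -> N = addpdiv src tgt M D g ->
                         forall e, out0 src tgt M f e = out0 src tgt M g e /\
                                   out1 src tgt M f e = out1 src tgt M g e])
    /\
    (forall A, is_anchor_cell src tgt M D A ->
       (exists s : seq (cdata V E),
          [/\ uniq s, size s = (2 ^ s_anchor A)%N &
              forall C, C \in s <-> (is_cell src tgt M D C /\ a C = A)])
       /\
       forall dA j, cell_dim src tgt M D A dA -> (j <= s_anchor A)%N ->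
         exists s : seq (cdata V E),
           [/\ uniq s, size s = 'C(s_anchor A, j) &
               forall C, C \in s <->
                 [/\ is_cell src tgt M D C, a C = A & cell_dim src tgt M D C (dA + j)]]).
Proof.
exists (@acell V E); split.
  by move=> C hC; apply: (part1 hM hvs hC).
by move=> A hA; apply: (part2 hM hvs hA).
Qed.
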